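(* Let $\mathcal V$, $\mathcal W$, $\mathcal Z$ be complex Hilbert spaces and let $R:\mathcal Z\supset\operatorname{dom}R\to\mathcal V\times\mathcal W$ be a linear operator. Let $P_{\mathcal V}$ and $P_{\mathcal W}$ denote the canonical projections of $\mathcal V\times\mathcal W$ onto $\mathcal V$ and $\mathcal W$, and regard $P_{\mathcal V}R$ and $P_{\mathcal W}R$ as operators with domain $\operatorname{dom}R$. Then the following statements are equivalent: (i) $R$ is closed, and $P_{\mathcal V}R$ is closed with domain $\operatorname{dom}(P_{\mathcal V}R)=\operatorname{dom}R$; (ii) $P_{\mathcal V}R$ is closed with domain $\operatorname{dom}(P_{\mathcal V}R)=\operatorname{dom}R$, and $P_{\mathcal W}R\in L(\operatorname{dom}(P_{\mathcal V}R),\mathcal W)$; (iii) $R$ is closed, and $P_{\mathcal W}R\in L(\operatorname{dom}(P_{\mathcal V}R),\mathcal W)$.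
   Context: Here $\operatorname{dom}(P_{\mathcal V}R)=\operatorname{dom}R$ is equipped with the graph norm $\|z\|=(\|z\|_{\mathcal Z}^2+\|P_{\mathcal V}Rz\|_{\mathcal V}^2)^{1/2}$, and $L(\cdot,\cdot)$ denotes the space of bounded linear operators. *)

(* Defs.v *)
From HB Require Import structures.
From mathcomp Require Import all_boot all_order all_algebra.
From mathcomp Require Import all_classical all_reals all_analysis.
From mathcomp.real_closed Require Import complex.
Set Implicit Arguments. Unset Strict Implicit. Unset Printing Implicit Defensive.
Import Order.TTheory GRing.Theory Num.Theory.
Local Open Scope ring_scope.
Local Open Scope classical_set_scope.

(* An inner product on a normed space over C = R[i] inducing its norm:
   linear in the first argument, Hermitian, and <x,x> = ||x||^2
   (positive definiteness follows from the last clause). *)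
Definition inner_product_of_norm (R : realType) (V : normedModType R[i])
  (ip : V -> V -> R[i]) : Prop :=
  [/\ forall (a : R[i]) (x1 x2 y : V), ip (a *: x1 + x2) y = a * ip x1 y + ip x2 y,
      forall x y : V, ip y x = (ip x y)^*
    & forall x : V, ip x x = `|x| ^+ 2].

Definition is_hilbert (R : realType) (V : completeNormedModType R[i]) : Prop :=
  exists ip : V -> V -> R[i], inner_product_of_norm ip.

Definition linear_subspace (R : realType) (Z : normedModType R[i]) (D : set Z) : Prop :=
  [/\ D 0,
      forall x y, D x -> D y -> D (x + y)
    & forall (a : R[i]) x, D x -> D (a *: x)].

Definition linear_on (R : realType) (Z : normedModType R[i]) (Y : lmodType R[i])
  (D : set Z) (f : Z -> Y) : Prop :=
  forall (a : R[i]) x y, D x -> D y -> f (a *: x + y) = a *: f x + f y.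

Definition closed_op (R : realType) (Z : normedModType R[i]) (Y : topologicalType)
  (D : set Z) (f : Z -> Y) : Prop :=
  closed [set p : Z * Y | D p.1 /\ p.2 = f p.1].

Definition graph_norm (R : realType) (Z V : normedModType R[i]) (g : Z -> V) (z : Z) : R[i] :=
  sqrtC (`|z| ^+ 2 + `|g z| ^+ 2).

(* f belongs to L(dom g, Y), where dom g = D carries the graph norm of g:
   f is linear on D and bounded w.r.t. the graph norm. *)
Definition bounded_graph_norm (R : realType) (Z V Y : normedModType R[i])
  (D : set Z) (g : Z -> V) (f : Z -> Y) : Prop :=
  linear_on D f /\
  exists c : R, forall z, D z -> `|f z| <= real_complex R c * graph_norm g z.

(* Submission.v *)
From Pilot Require Import Defs.
From HB Require Import structures.
From mathcomp Require Import all_boot all_order all_algebra.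
From mathcomp Require Import all_classical all_reals all_analysis.
From mathcomp.real_closed Require Import complex.
From mathcomp.algebra_tactics Require Import ring lra.
Set Implicit Arguments. Unset Strict Implicit. Unset Printing Implicit Defensive.
Import Order.TTheory GRing.Theory Num.Theory.
Local Open Scope ring_scope.
Local Open Scope classical_set_scope.

Lemma zid4 (U : zmodType) (x0 y a1 a2 : U) : y - (a1 - a2) = x0 + y - a1 - (x0 - a2).
Proof. rewrite opprB [x0 + y]addrC -!addrA; congr (_ + _); rewrite opprB addrA addrCA !addrA. by rewrite [a2 + x0 - a1]addrAC addrK. Qed.

Section GS.
Variables (R : realType) (Z V : completeNormedModType R[i]) (D : set Z) (f : Z -> V).
Local Notation "x %:C" := (real_complex R x).
Hypotheses (hD : linear_subspace D) (hf : linear_on D f) (cf : closed_op D f).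

Definition X := {z : Z | D z}.
HB.instance Definition _ := gen_eqMixin X.
HB.instance Definition _ := gen_choiceMixin X.

Lemma Xval_inj (x y : X) : proj1_sig x = proj1_sig y -> x = y.
Proof. case: x y => [a pa] [b pb] /= eab; subst b; congr exist; exact: Prop_irrelevance. Qed.

Lemma D0 : D 0. Proof. by case: hD. Qed.
Lemma DD x y : D x -> D y -> D (x + y). Proof. by case: hD => _ h _; apply: h. Qed.
Lemma DZ a x : D x -> D (a *: x). Proof. by case: hD => _ _ h; apply: h. Qed.
Lemma DN x : D x -> D (- x). Proof. by move=> /(DZ (-1)); rewrite scaleN1r. Qed.

Definition X0 : X := exist _ 0 D0.
Definition Xadd (x y : X) : X := exist _ (proj1_sig x + proj1_sig y) (DD (proj2_sig x) (proj2_sig y)).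
Definition Xopp (x : X) : X := exist _ (- proj1_sig x) (DN (proj2_sig x)).
Definition Xscale (r : R) (x : X) : X := exist _ (r%:C *: proj1_sig x) (DZ _ (proj2_sig x)).

Lemma XaddA : associative Xadd. Proof. by move=> x y z; apply: Xval_inj => /=; rewrite addrA. Qed.
Lemma XaddC : commutative Xadd. Proof. by move=> x y; apply: Xval_inj => /=; rewrite addrC. Qed.
Lemma Xadd0 : left_id X0 Xadd. Proof. by move=> x; apply: Xval_inj => /=; rewrite add0r. Qed.
Lemma XaddN : left_inverse X0 Xopp Xadd. Proof. by move=> x; apply: Xval_inj => /=; rewrite addNr. Qed.
HB.instance Definition _ := GRing.isZmodule.Build X XaddA XaddC Xadd0 XaddN.

Lemma XscaleA a b v : Xscale a (Xscale b v) = Xscale (a * b) v.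
Proof. apply: Xval_inj => /=; rewrite scalerA; congr (_ *: _); by rewrite rmorphM. Qed.
Lemma Xscale1 : left_id 1 Xscale.
Proof. move=> x; apply: Xval_inj => /=. by rewrite scale1r. Qed.
Lemma XscaleDr : right_distributive Xscale +%R.
Proof. move=> a x y; apply: Xval_inj => /=; by rewrite scalerDr. Qed.
Lemma XscaleDl v : {morph Xscale^~ v: a b / a + b}.
Proof. move=> a b; apply: Xval_inj => /=; by rewrite rmorphD scalerDl. Qed.
HB.instance Definition _ := GRing.Zmodule_isLmodule.Build R X XscaleA Xscale1 XscaleDr XscaleDl.


Lemma ReD (a b : R[i]) : complex.Re (a + b) = complex.Re a + complex.Re b. Proof. by case: a; case: b. Qed.
Lemma ReM (k : R) (c : R[i]) : complex.Re (k%:C * c) = k * complex.Re c.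
Proof. case: c => a b /=; by rewrite !mul0r subr0. Qed.
Lemma ReK (c : R[i]) : 0 <= c -> (complex.Re c)%:C = c.
Proof. case: c => a b; rewrite lecE /= => /andP[/eqP hb _]; by rewrite hb. Qed.
Lemma Re_ge0 (c : R[i]) : 0 <= c -> 0 <= complex.Re c.
Proof. by rewrite lecE => /andP[]. Qed.
Lemma Re_le (a b : R[i]) : a <= b -> complex.Re a <= complex.Re b.
Proof. by rewrite lecE => /andP[]. Qed.
Lemma normC (l : R) : `|l%:C| = `|l|%:C.
Proof. by rewrite normc_def /= expr0n /= addr0 sqrtr_sqr. Qed.

Lemma f0 : f 0 = 0.
Proof. have := hf 1 D0 D0; rewrite !scale1r addr0 => h. by apply: (addrI (f 0)); rewrite addr0 -h. Qed.
Lemma fZ a z : D z -> f (a *: z) = a *: f z.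
Proof. move=> Dz; have := hf a Dz D0; rewrite !addr0 f0 addr0. by []. Qed.
Lemma fD x y : D x -> D y -> f (x + y) = f x + f y.
Proof. move=> Dx Dy; have := hf 1 Dx Dy; by rewrite !scale1r. Qed.

Lemma XD (x : X) : D (proj1_sig x). Proof. exact: proj2_sig x. Qed.

Definition Xn (x : X) : R := complex.Re (`|proj1_sig x| + `|f (proj1_sig x)|).

Lemma Xn_normD x y : Xn (x + y) <= Xn x + Xn y.
Proof.
rewrite /Xn -ReD; apply: Re_le => /=; rewrite fD; [|exact: XD..].
rewrite addrACA; apply: lerD; exact: ler_normD.
Qed.
Lemma Xn_normZ (l : R) x : Xn (l *: x) = `|l| * Xn x.
Proof.
rewrite /Xn /= fZ; [|exact: XD]; rewrite !normrZ normC -mulrDr ReM. by [].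
Qed.
Lemma Xn_eq0 x : Xn x = 0 -> x = 0.
Proof.
rewrite /Xn ReD => /eqP; rewrite paddr_eq0 ?Re_ge0 // => /andP[/eqP h _].
apply: Xval_inj => /=; apply/eqP; rewrite -normr_eq0 -(ReK (normr_ge0 _)) h. by [].
Qed.
HB.instance Definition _ := Lmodule_isNormed.Build R X Xn_normD Xn_normZ Xn_eq0.

Lemma XnE (x : X) : `|x| = Xn x. Proof. by []. Qed.

Lemma Re_gt0 (c : R[i]) : 0 < c -> 0 < complex.Re c.
Proof. by rewrite ltcE => /andP[]. Qed.

Lemma fN z : D z -> f (- z) = - f z.
Proof. move=> Dz; by rewrite -scaleN1r fZ // scaleN1r. Qed.

Lemma val_sub (x y : X) : proj1_sig (x - y) = proj1_sig x - proj1_sig y.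
Proof. by []. Qed.
Lemma fval_sub (x y : X) : f (proj1_sig (x - y)) = f (proj1_sig x) - f (proj1_sig y).
Proof. have Dx := XD x; have Dy := XD y; have Dny := DN Dy. by rewrite val_sub fD // fN. Qed.

Lemma XnC (w : X) : (`|w|)%:C = `|proj1_sig w| + `|f (proj1_sig w)|.
Proof. by rewrite XnE /Xn ReK // addr_ge0. Qed.
Lemma Xn_le1 (w : X) : `|proj1_sig w| <= (`|w|)%:C.
Proof. by rewrite XnC lerDl. Qed.
Lemma Xn_le2 (w : X) : `|f (proj1_sig w)| <= (`|w|)%:C.
Proof. by rewrite XnC lerDr. Qed.

Lemma X_complete (F : set_system X) : ProperFilter F -> cauchy F -> cvg F.
Proof.
move=> PF /cauchyP HF.
have c1 : cauchy ((fun x => proj1_sig x) @ F).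
  apply: cauchy_exP => e e0.
  have [x Fx] := HF (complex.Re e) (Re_gt0 e0).
  exists (proj1_sig x).
  suff : F [set y | ball (proj1_sig x) e (proj1_sig y)] by [].
  apply: filterS Fx => y.
  rewrite -!ball_normE /ball_ /= => hy.
  rewrite -val_sub; apply: (le_lt_trans (Xn_le1 _)).
  by rewrite -(ReK (ltW e0)) ltcR.
have c2 : cauchy ((fun x => f (proj1_sig x)) @ F).
  apply: cauchy_exP => e e0.
  have [x Fx] := HF (complex.Re e) (Re_gt0 e0).
  exists (f (proj1_sig x)).
  suff : F [set y | ball (f (proj1_sig x)) e (f (proj1_sig y))] by [].
  apply: filterS Fx => y.
  rewrite -!ball_normE /ball_ /= => hy.
  rewrite -fval_sub; apply: (le_lt_trans (Xn_le2 _)).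
  by rewrite -(ReK (ltW e0)) ltcR.
have [z Hz] := (cvg_ex _).1 (cauchy_cvg _ c1).
have [v Hv] := (cvg_ex _).1 (cauchy_cvg _ c2).
have Hp : (fun x : X => (proj1_sig x, f (proj1_sig x))) @ F --> (z, v).
  by apply: cvg_pair.
have : [set p : Z * V | D p.1 /\ p.2 = f p.1] (z, v).
  apply: (closed_cvg _ cf _ _ Hp).
  by apply: nearW => x /=; split => //; exact: XD.
move=> [/= Dz vE].
apply/cvg_ex; exists (exist _ z Dz).
apply/(@cvgrPdist_lt _ _ _ _ _ id) => e e0.
move/cvgrPdist_lt: Hz => /(_ (e / 2)%:C) Hz.
move/cvgrPdist_lt: Hv => /(_ (e / 2)%:C) Hv.
have e2 : 0 < e / 2 by rewrite divr_gt0.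
have := Hz; rewrite ltcR => /(_ e2) Hz'.
have := Hv; rewrite ltcR => /(_ e2) Hv'.
near=> y.
rewrite -ltcR XnC fval_sub /= -vE.
rewrite {1}(splitr e) rmorphD /=; apply: ltrD.
  by near: y; exact: Hz'.
by near: y; exact: Hv'.
Unshelve. all: by end_near. Qed.

HB.instance Definition _ := Uniform_isComplete.Build X X_complete.

Variables (W : completeNormedModType R[i]) (g : Z -> W).
Hypotheses (hg : linear_on D g)
  (cT : closed [set p : Z * (V * W) | D p.1 /\ p.2 = (f p.1, g p.1)]).

Definition gX (x : X) : W := g (proj1_sig x).
Definition A (n : nat) := [set x : X | `|gX x| <= (n%:R)%:C].

Lemma step1 : exists n (x0 : X) (r : R), 0 < r /\ forall y, ball x0 r y -> closure (A n) y.
Proof.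
have NB : ~ (forall n, open (~` closure (A n)) /\ dense (~` closure (A n))).
  move=> H; have := Baire H.
  move=> /(_ setT) []; first by exists 0.
  - exact: openT.
  move=> x [_ /= Hx].
  apply: (Hx (Num.truncn (complex.Re `|gX x|)).+1 Logic.I); apply: subset_closure => /=.
  rewrite /A /= -{1}(ReK (normr_ge0 (gX x))) lecR; apply: ltW; exact: archimedean.Num.Theory.truncnS_gt.
have [n Hn] : exists n, ~ dense (~` closure (A n)).
  apply: contrapT => H; apply: NB => n; split.
    by rewrite openC; exact: closed_closure.
  apply: contrapT => Hd; apply: H; by exists n.
have [Ob [[x0 [oO Ox0]] OS]] := denseNE Hn.
have /nbhs_ballP [r r0 Hr] : nbhs x0 Ob by apply: open_nbhs_nbhs.
exists n, x0, r; split => // y /Hr Oy.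
apply: contrapT => Ny.
have : (Ob `&` ~` closure (A n)) y by [].
by rewrite OS.
Qed.

Section lin.
Variables (Y : lmodType R[i]) (h : Z -> Y) (hh : linear_on D h).
Lemma lin0 : h 0 = 0.
Proof. have := hh 1 D0 D0; rewrite !scale1r addr0 => e. by apply: (addrI (h 0)); rewrite addr0 -e. Qed.
Lemma linZ a z : D z -> h (a *: z) = a *: h z.
Proof. move=> Dz; have := hh a Dz D0; by rewrite !addr0 lin0 addr0. Qed.
Lemma linD x y : D x -> D y -> h (x + y) = h x + h y.
Proof. move=> Dx Dy; have := hh 1 Dx Dy; by rewrite !scale1r. Qed.
Lemma linN z : D z -> h (- z) = - h z.
Proof. move=> Dz; by rewrite -[- z]scaleN1r linZ // scaleN1r. Qed.
Lemma linX_sub (x y : X) : h (proj1_sig (x - y)) = h (proj1_sig x) - h (proj1_sig y).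
Proof. have Dx := XD x; have Dy := XD y; have Dny := DN Dy. by rewrite val_sub linD // linN. Qed.
Lemma linX_add (x y : X) : h (proj1_sig (x + y)) = h (proj1_sig x) + h (proj1_sig y).
Proof. have Dx := XD x; have Dy := XD y. by rewrite /= linD. Qed.
Lemma linX_scale (t : R) (x : X) : h (proj1_sig (t *: x)) = t%:C *: h (proj1_sig x).
Proof. have Dx := XD x. change (h (t%:C *: proj1_sig x) = t%:C *: h (proj1_sig x)). by rewrite linZ. Qed.
Lemma linX0 : h (proj1_sig (0 : X)) = 0.
Proof. exact: lin0. Qed.
End lin.

Lemma step2 : exists M r : R, [/\ 0 < r, 0 <= M & forall y : X, `|y| < r ->
  forall eps, 0 < eps -> exists a : X, `|gX a| <= M%:C /\ `|y - a| < eps].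
Proof.
have [n [x0 [r [r0 Hb]]]] := step1.
exists (n%:R + n%:R), r; split => //.
move=> y yr e e0.
have e2 : 0 < e / 2 by rewrite divr_gt0.
have c1 : closure (A n) (x0 + y).
  apply: Hb; rewrite -ball_normE /ball_ /=.
  by rewrite opprD addrA subrr sub0r normrN.
have c2 : closure (A n) x0 by apply: Hb; exact: ballxx.
have [a1 [Aa1 Ba1]] := c1 _ (nbhsx_ballx (x0 + y) _ e2).
have [a2 [Aa2 Ba2]] := c2 _ (nbhsx_ballx x0 _ e2).
exists (a1 - a2); split.
  rewrite /gX linX_sub //; apply: (le_trans (ler_normB _ _)); rewrite rmorphD; exact: lerD.
move: Ba1 Ba2; rewrite -!ball_normE /ball_ /= => h1 h2.
rewrite (zid4 x0); apply: (le_lt_trans (ler_normB _ _)).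
by rewrite (splitr e); exact: ltrD.
Qed.

Lemma step3 : exists M r : R, [/\ 0 < r, 0 <= M & forall (t : R) (y : X), 0 < t ->
  `|y| < t * r -> forall eps, 0 < eps -> exists a : X, `|gX a| <= (t * M)%:C /\ `|y - a| < eps].
Proof.
have [M [r [r0 M0 H]]] := step2.
exists M, r; split => // t y t0 yr e e0.
have t0' : t != 0 by rewrite gt_eqF.
have [||a [ga ya]] := H (t^-1 *: y) _ (e / t) _.
- by rewrite normrZ gtr0_norm ?invr_gt0 // ltr_pdivrMl.
- by rewrite divr_gt0.
exists (t *: a); split.
  rewrite /gX linX_scale // normrZ normC gtr0_norm // rmorphM /=.
  by apply: ler_wpM2l => //; rewrite ler0c ltW.
have -> : y - t *: a = t *: (t^-1 *: y - a) by rewrite scalerBr scalerA mulfV // scale1r.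
by rewrite normrZ gtr0_norm // -ltr_pdivlMl // mulrC.
Qed.

Lemma step4 : exists C : R, exists2 r : R, 0 < r & forall y : X, `|y| < r -> `|gX y| <= C%:C.
Proof.
have [M [r [r0 M0 H]]] := step3.
pose q : R := 2^-1.
have q0 : 0 < q by rewrite invr_gt0.
have qk0 k : 0 < q ^+ k by rewrite exprn_gt0.
have /choice [h Hh] : forall p : nat * X, exists a : X, `|p.2| < q ^+ p.1 * r ->
    `|gX a| <= (q ^+ p.1 * M)%:C /\ `|p.2 - a| < q ^+ p.1.+1 * r.
  move=> [k y] /=.
  case: (pselect (`|y| < q ^+ k * r)) => [yr|nyr]; last by exists 0.
  have [a [ga ya]] := H (q ^+ k) y (qk0 k) yr (q ^+ k.+1 * r) (mulr_gt0 (qk0 _) r0).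
  by exists a.
exists (2 * M + 1), r => // y yr.
pose ys := fix ys k := if k is k'.+1 then ys k' - h (k', ys k') else y.
have ysS k : ys k.+1 = ys k - h (k, ys k) by [].
have Hys k : `|ys k| < q ^+ k * r.
  elim: k => [|k IH]; first by rewrite expr0 mul1r.
  by rewrite ysS; case: (Hh (k, ys k) IH).
have Ha k : `|gX (h (k, ys k))| <= (q ^+ k * M)%:C by case: (Hh (k, ys k) (Hys k)).
have Hsum k j : `|gX (ys k - ys (k + j)%N)| <= (2 * M * (q ^+ k - q ^+ (k + j)%N))%:C.
  elim: j => [|j IH].
    by rewrite !addn0 subrr /gX linX0 // normr0 subrr mulr0.
  rewrite addnS ysS opprD opprK addrA /gX linX_add //.
  apply: (le_trans (ler_normD _ _)).
  apply: (le_trans (lerD IH (Ha _))).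
  rewrite -rmorphD lecR exprSr le_eqVlt; apply/orP; left; apply/eqP.
  by rewrite /q; field.
have q1 : `|q| < 1 by rewrite gtr0_norm // invf_lt1 // ltr1n.
have qcvg := cvg_expr q1.
have Hs : (fun k => y - ys k) @ \oo --> y.
  apply/cvgrPdist_lt => e e0.
  move/cvgrPdist_lt: qcvg => /(_ (e / r)) [|K _ HK]; first by rewrite divr_gt0.
  exists K => // k /= Kk.
  have := HK k Kk; rewrite /= sub0r normrN gtr0_norm // => hk.
  rewrite opprB addrC subrK; apply: (lt_trans (Hys k)).
  by rewrite -ltr_pdivlMr.
have Hz : (fun k => proj1_sig (y - ys k)) @ \oo --> proj1_sig y.
  apply/cvgrPdist_lt => e e0.
  move/cvgrPdist_lt: Hs => /(_ (complex.Re e) (Re_gt0 e0)) Hs.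
  near=> k.
  rewrite -val_sub; apply: (le_lt_trans (Xn_le1 _)).
  rewrite -(ReK (ltW e0)) ltcR; near: k; exact: Hs.
have Hf : (fun k => f (proj1_sig (y - ys k))) @ \oo --> f (proj1_sig y).
  apply/cvgrPdist_lt => e e0.
  move/cvgrPdist_lt: Hs => /(_ (complex.Re e) (Re_gt0 e0)) Hs.
  near=> k.
  rewrite -linX_sub //; apply: (le_lt_trans (Xn_le2 _)).
  rewrite -(ReK (ltW e0)) ltcR; near: k; exact: Hs.
have HsumB K m : (K <= m)%N -> `|gX (ys K - ys m)| <= (2 * M * q ^+ K)%:C.
  move=> Km; rewrite -(subnKC Km); apply: (le_trans (Hsum K (m - K)%N)).
  rewrite lecR; apply: ler_wpM2l; first by rewrite mulr_ge0.
  by rewrite gerBl ltW.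
have Gc : cauchy ((fun k => gX (y - ys k)) @ \oo).
  apply: cauchy_exP => e e0.
  have e0' := Re_gt0 e0.
  move/cvgrPdist_lt: qcvg => /(_ (complex.Re e / (2 * M + 1))) [|K _ HK].
    by rewrite divr_gt0 // ltr_wpDl // mulr_ge0.
  exists (gX (y - ys K)).
  exists K => // m /= Km.
  rewrite -ball_normE /ball_ /=.
  rewrite /gX -linX_sub // (_ : (y - ys K) - (y - ys m) = ys m - ys K); last first.
    by rewrite opprB addrC addrA subrK.
  rewrite linX_sub // distrC -linX_sub //.
  apply: (le_lt_trans (HsumB K m Km)).
  rewrite -(ReK (ltW e0)) ltcR.
  have := HK K (leqnn K); rewrite /= sub0r normrN gtr0_norm // ltr_pdivlMr; last first.
    by rewrite ltr_wpDl // mulr_ge0.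
  apply: le_lt_trans; rewrite mulrC ler_wpM2l //; first exact: ltW.
  by rewrite lerDl.
have [w Gw] := (cvg_ex _).1 (cauchy_cvg _ Gc).
have Hp2 : (fun k => (f (proj1_sig (y - ys k)), gX (y - ys k))) @ \oo --> (f (proj1_sig y), w).
  by apply: cvg_pair.
have Hp : (fun k => (proj1_sig (y - ys k), (f (proj1_sig (y - ys k)), gX (y - ys k)))) @ \oo --> (proj1_sig y, (f (proj1_sig y), w)).
  exact: (cvg_pair Hz Hp2).
have : [set p : Z * (V * W) | D p.1 /\ p.2 = (f p.1, g p.1)] (proj1_sig y, (f (proj1_sig y), w)).
  apply: (closed_cvg _ cT _ _ Hp); apply: nearW => k /=; split; [exact: (XD (y - ys k)) | by []].
move=> [_ /= e]; have wE : w = g (proj1_sig y) := congr1 snd e.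
move/cvgrPdist_lt: Gw => /(_ 1 ltr01) [K _ HK].
have hK := HK K (leqnn K).
rewrite /gX -wE.
rewrite -[w](subrK (gX (y - ys K))).
apply: (le_trans (ler_normD _ _)).
rewrite rmorphD rmorph1 [X in _ <= X]addrC; apply: lerD; first exact: (ltW hK).
have := HsumB 0%N K (leq0n K); rewrite expr0 mulr1 => hb.
exact: hb.
Unshelve. all: by end_near. Qed.

Lemma XnCM (k : R) (w : X) : (k * `|w|)%:C = k%:C * (`|proj1_sig w| + `|f (proj1_sig w)|).
Proof. rewrite -XnC; exact: rmorphM. Qed.

Lemma sq_le (a b : R[i]) : 0 <= a -> 0 <= b -> a <= sqrtC (a ^+ 2 + b ^+ 2).
Proof.
move=> a0 b0; rewrite -{1}(sqrCK a0) ler_sqrtC ?nnegrE ?addr_ge0 ?exprn_ge0 //.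
by rewrite lerDl exprn_ge0.
Qed.

Lemma closed_graph_bound : exists c : R, forall z, D z -> `|g z| <= c%:C * graph_norm f z.
Proof.
have [C [r r0 H]] := step4.
have C0 : 0 <= C.
  have h0 := H 0; rewrite normr0 in h0; have := h0 r0; rewrite /gX (linX0 hg) normr0 ler0c. done.
have Hx : forall x : X, `|gX x| <= (2 * C / r * `|x|)%:C.
  move=> x; have [->|xn0] := eqVneq x 0.
    by rewrite /gX linX0 // !normr0 mulr0.
  have nx : 0 < `|x| by rewrite normr_gt0.
  pose t := r / (2 * `|x|).
  have t0 : 0 < t by rewrite divr_gt0 // mulr_gt0.
  have := H (t *: x); rewrite normrZ gtr0_norm //.
  have -> : t * `|x| = r / 2 by rewrite /t; move: nx; move: (`|x|) => a a0; field; rewrite gt_eqF.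
  move=> /(_ ltac:(lra)).
  rewrite /gX linX_scale // normrZ normC gtr0_norm //.
  rewrite -(ReK (normr_ge0 (g (proj1_sig x)))) -rmorphM lecR lecR => hb.
  rewrite -(ler_pM2l t0); apply: (le_trans hb); rewrite le_eqVlt; apply/orP; left; apply/eqP.
  by rewrite /t; move: nx; move: (`|x|) => a a0; field; rewrite ?gt_eqF.
exists (2 * (2 * C / r)) => z Dz.
have := Hx (exist _ z Dz); rewrite XnCM /gX /= => hb.
apply: (le_trans hb).
have k0 : 0 <= (2 * C / r)%:C by rewrite ler0c divr_ge0 // ?mulr_ge0 // ltW.
apply: (le_trans (ler_wpM2l k0 (_ : _ <= 2 * graph_norm f z))).
  by rewrite mulr_natl mulr2n; apply: lerD; rewrite /graph_norm; [|rewrite addrC]; apply: sq_le.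
rewrite le_eqVlt; apply/orP; left; apply/eqP.
have -> : 2 * (2 * C / r) = 2 * C / r + 2 * C / r by ring.
by rewrite rmorphD; ring.
Qed.
End GS.

Lemma cvg_p1 (T : Type) (F : set_system T) {FF : Filter F} (U V : topologicalType) (u : T -> U * V) (p : U * V) :
  u @ F --> p -> (fun t => (u t).1) @ F --> p.1.
Proof. move=> H. exact: (cvg_comp _ _ H cvg_fst). Qed.
Lemma cvg_p2 (T : Type) (F : set_system T) {FF : Filter F} (U V : topologicalType) (u : T -> U * V) (p : U * V) :
  u @ F --> p -> (fun t => (u t).2) @ F --> p.2.
Proof. move=> H. exact: (cvg_comp _ _ H cvg_snd). Qed.

Section Main.
Variables (R : realType) (Z V W : completeNormedModType R[i]) (D : set Z) (T : Z -> V * W).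
Hypotheses (hD : linear_subspace D) (hT : linear_on D T).
Local Notation "x %:C" := (real_complex R x).

Lemma hV : linear_on D (fun z => (T z).1).
Proof. by move=> a x y Dx Dy; rewrite hT. Qed.
Lemma hW : linear_on D (fun z => (T z).2).
Proof. by move=> a x y Dx Dy; rewrite hT. Qed.

Lemma m_DN x : D x -> D (- x). Proof. by move=> Dx; rewrite -scaleN1r; case: hD => _ _; apply. Qed.
Lemma m_DD x y : D x -> D y -> D (x + y). Proof. by case: hD => _ h _; apply: h. Qed.

Lemma m_linB (Y : lmodType R[i]) (h : Z -> Y) : linear_on D h ->
  forall x y, D x -> D y -> h (x - y) = h x - h y.
Proof.
move=> hh x y Dx Dy.
have D0 : D 0 by case: hD.
have h0 : h 0 = 0.
  have := hh 1 _ _ D0 D0; rewrite !scale1r addr0 => e. by apply: (addrI (h 0)); rewrite addr0 -e.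
have := hh (-1) _ _ Dy Dx; rewrite !scaleN1r addrC => ->. by rewrite addrC.
Qed.

Lemma gn_le (Y : normedModType R[i]) (h : Z -> Y) z : graph_norm h z <= `|z| + `|h z|.
Proof.
rewrite /graph_norm -(sqrCK (addr_ge0 (normr_ge0 z) (normr_ge0 (h z)))).
rewrite ler_sqrtC ?nnegrE ?addr_ge0 ?exprn_ge0 //.
by rewrite sqrrD -addrA lerD2l lerDr mulrn_wge0 // mulr_ge0.
Qed.

Lemma bound_abs (Y U : normedModType R[i]) (f : Z -> Y) (g : Z -> U) (c : R) :
  (forall z, D z -> `|g z| <= c%:C * graph_norm f z) ->
  forall z, D z -> `|g z| <= (`|c|)%:C * (`|z| + `|f z|).
Proof.
move=> Hc z Dz; apply: (le_trans (Hc z Dz)).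
have G0 : 0 <= graph_norm f z by rewrite /graph_norm sqrtC_ge0 addr_ge0 // exprn_ge0.
apply: (le_trans (ler_wpM2r G0 (_ : c%:C <= (`|c|)%:C))); first by rewrite lecR ler_norm.
by apply: ler_wpM2l; [rewrite ler0c | exact: gn_le].
Qed.


Lemma ii_iii : closed_op D (fun z => (T z).1) ->
  bounded_graph_norm D (fun z => (T z).1) (fun z => (T z).2) -> closed_op D T.
Proof.
move=> cV [hW' [c Hc]] p; rewrite closureEcvg => -[F PF [Fp EF]].
have FG : F [set q | D q.1 /\ q.2 = T q.1] by apply: EF.
have H1 : (fun q : Z * (V * W) => q.1) @ F --> p.1 := cvg_p1 (FF := @filter_filter _ F PF) (u := id) Fp.
have H2 : (fun q : Z * (V * W) => q.2) @ F --> p.2 := cvg_p2 (FF := @filter_filter _ F PF) (u := id) Fp.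
have H21 : (fun q : Z * (V * W) => q.2.1) @ F --> p.2.1 := cvg_p1 (FF := @filter_filter _ F PF) H2.
have H22 : (fun q : Z * (V * W) => q.2.2) @ F --> p.2.2 := cvg_p2 (FF := @filter_filter _ F PF) H2.
have Hv : (fun q : Z * (V * W) => (q.1, q.2.1)) @ F --> (p.1, p.2.1) by apply: cvg_pair.
have [Dz vE] : [set r | D r.1 /\ r.2 = (T r.1).1] (p.1, p.2.1).
  apply: (closed_cvg _ cV _ _ Hv); apply: filterS FG => q [Dq ->]; by split.
have Hw : (fun q : Z * (V * W) => q.2.2) @ F --> (T p.1).2.
  apply/cvgrPdist_lt => e e0.
  pose K := `|c|.
  have K0 : 0 <= K := normr_ge0 c.
  pose d := complex.Re e / (2 * (K + 1)).
  have d0 : 0 < d by rewrite divr_gt0 ?Re_gt0 // mulr_gt0 // ltr_wpDl.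
  have d0' : 0 < d%:C by rewrite ltcR.
  move/cvgrPdist_lt : H1 => /(_ _ d0') H1'.
  move/cvgrPdist_lt : H21 => /(_ _ d0') H21'.
  near=> q.
  have [Dq q2] : D q.1 /\ q.2 = T q.1 by near: q.
  rewrite q2 -(m_linB hW) //.
  apply: (le_lt_trans (bound_abs Hc (m_DD Dz (m_DN Dq)))).
  rewrite (m_linB hV) // -vE -q2.
  apply: (@le_lt_trans _ _ (K%:C * (d%:C + d%:C))).
    rewrite /=; apply: ler_wpM2l; first by rewrite ler0c.
    apply: lerD; apply: ltW; [near: q; exact: H1' | near: q; exact: H21'].
  rewrite -(ReK (ltW e0)) -!rmorphD -rmorphM ltcR.
  have E0 := Re_gt0 e0.
  have -> : d + d = complex.Re e / (K + 1) by rewrite /d; field; rewrite gt_eqF // ltr_wpDl.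
  rewrite mulrA ltr_pdivrMr ?ltr_wpDl //; nra.
have w2 : p.2.2 = (T p.1).2.
  exact: (cvg_unique (@norm_hausdorff _ W) (FF := fmap_proper_filter (fun q : Z * (V * W) => q.2.2) PF) H22 Hw).
split => //.
move: vE => /= vE.
by rewrite [p.2]surjective_pairing vE w2 -surjective_pairing.
Unshelve. all: by end_near. Qed.


Lemma iii_i : closed_op D T ->
  bounded_graph_norm D (fun z => (T z).1) (fun z => (T z).2) -> closed_op D (fun z => (T z).1).
Proof.
move=> cT' [hW' [c Hc]] p; rewrite closureEcvg => -[F PF [Fp EF]].
have FG : F [set q | D q.1 /\ q.2 = (T q.1).1] by apply: EF.
have H1 : (fun q : Z * V => q.1) @ F --> p.1 := cvg_p1 (FF := @filter_filter _ F PF) (u := id) Fp.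
have H2 : (fun q : Z * V => q.2) @ F --> p.2 := cvg_p2 (FF := @filter_filter _ F PF) (u := id) Fp.
pose K := `|c|.
have K0 : 0 <= K := normr_ge0 c.
have Gc : cauchy ((fun q : Z * V => (T q.1).2) @ F).
  apply: cauchy_exP => e e0.
  have E0 := Re_gt0 e0.
  pose d := complex.Re e / (4 * (K + 1)).
  have d0 : 0 < d by rewrite divr_gt0 // mulr_gt0 // ltr_wpDl.
  have d0' : 0 < d%:C by rewrite ltcR.
  move/cvgrPdist_lt : H1 => /(_ _ d0') H1'.
  move/cvgrPdist_lt : H2 => /(_ _ d0') H2'.
  have FS : F [set q | (D q.1 /\ q.2 = (T q.1).1) /\ (`|p.1 - q.1| < d%:C /\ `|p.2 - q.2| < d%:C)].
    by apply: filterI => //; apply: filterI.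
  have [q0 [[Dq0 q02] [q01 q02']]] := filter_ex FS.
  exists (T q0.1).2.
  suff : F [set q | ball (T q0.1).2 e (T q.1).2] by [].
  apply: filterS FS => q [[Dq q2] [q1 q2']].
  rewrite -ball_normE /ball_ /= -(m_linB hW) //.
  apply: (le_lt_trans (bound_abs Hc (m_DD Dq0 (m_DN Dq)))).
  rewrite (m_linB hV) // -q2 -q02.
  apply: (@le_lt_trans _ _ (K%:C * ((d%:C + d%:C) + (d%:C + d%:C)))).
    apply: ler_wpM2l; first by rewrite ler0c.
    have tri (U : normedModType R[i]) (a b x : U) : `|a - x| < d%:C -> `|a - b| < d%:C -> `|b - x| <= d%:C + d%:C.
      move=> h1 h2; rewrite -(subrKA a) addrC.
      apply: (le_trans (ler_normD _ _)); rewrite distrC in h2.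
      by apply: lerD; apply: ltW.
    by apply: lerD; rewrite distrC; [apply: (tri _ p.1) | apply: (tri _ p.2)].
  rewrite -(ReK (ltW e0)) -!rmorphD -rmorphM ltcR.
  have -> : d + d + (d + d) = complex.Re e / (K + 1) by rewrite /d; field; rewrite gt_eqF // ltr_wpDl.
  rewrite mulrA ltr_pdivrMr ?ltr_wpDl //; nra.
have [w Hw] := (cvg_ex _).1 (cauchy_cvg _ Gc).
have HT1 : (fun q : Z * V => (T q.1).1) @ F --> p.2.
  apply/cvgrPdist_lt => e e0.
  move/cvgrPdist_lt: H2 => /(_ e e0) H2'.
  near=> q.
  have [_ e2] : D q.1 /\ q.2 = (T q.1).1 by near: q.
  rewrite -e2; near: q; exact: H2'.
have HT' : (fun q : Z * V => ((T q.1).1, (T q.1).2)) @ F --> (p.2, w) by apply: cvg_pair.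
have HT : (fun q : Z * V => T q.1) @ F --> (p.2, w).
  by rewrite (_ : (fun q : Z * V => T q.1) = (fun q : Z * V => ((T q.1).1, (T q.1).2))) //; apply/funext => q; case: (T q.1).
have HTp : (fun q : Z * V => (q.1, T q.1)) @ F --> (p.1, (p.2, w)) by exact: (cvg_pair H1 HT).
have [Dp eT] : [set r : Z * (V * W) | D r.1 /\ r.2 = T r.1] (p.1, (p.2, w)).
  apply: (closed_cvg _ cT' _ _ HTp); apply: filterS FG => q [Dq _]; by split.
split => //; move: eT => /= <-; by [].
Unshelve. all: by end_near. Qed.

End Main.

Unset Implicit Arguments.

Theorem lemma2p3 (R : realType) (V W Z : completeNormedModType R[i])
  (hV : is_hilbert V) (hW : is_hilbert W) (hZ : is_hilbert Z)
  (D : set Z) (T : Z -> V * W)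
  (hD : linear_subspace D) (hT : linear_on D T) :
  let PVT := fun z => (T z).1 in
  let PWT := fun z => (T z).2 in
  let i_ := closed_op D T /\ closed_op D PVT in
  let ii_ := closed_op D PVT /\ bounded_graph_norm D PVT PWT in
  let iii_ := closed_op D T /\ bounded_graph_norm D PVT PWT in
  (i_ <-> ii_) /\ (ii_ <-> iii_).
Proof.
move=> PVT PWT i_ ii_ iii_.
have h23 : ii_ -> iii_.
  by move=> [cV bW]; split => //; exact: (ii_iii hD hT cV bW).
have h31 : iii_ -> i_.
  by move=> [cT bW]; split => //; exact: (iii_i hD hT cT bW).
have h12 : i_ -> ii_.
  move=> [cT cV]; split => //; split; first exact: (Pilot.Submission.hW hT).
  apply: (closed_graph_bound hD (Pilot.Submission.hV hT) cV (Pilot.Submission.hW hT)).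
  suff -> : [set p : Z * (V * W) | D p.1 /\ p.2 = (PVT p.1, PWT p.1)] = [set p | D p.1 /\ p.2 = T p.1] by [].
  by apply/funext => q; rewrite /PVT /PWT /= -surjective_pairing.
split; split => H.
- exact: h12.
- exact: h31 (h23 H).
- exact: h23.
- exact: h12 (h31 H).
Qed.
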